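(* Let $\phi$ be a posterior family for a model $\pi$ with data space $Y$ and parameter space $\Theta$, and let $f$ be a test quantity. Then for every $y\in Y$: $C_{\phi,f}(s\mid y)=C_f(s\mid y)$ for all $s\in\mathbb{R}$ if and only if $q_{\phi,f}(x\mid y)=x$ for all $x\in[0,1]$.
   Context: Model $\pi$: prior density $\pi_{\text{prior}}(\theta)$ on $\Theta$, observation density $\pi_{\text{obs}}(y\mid\theta)$ on $Y$, $\pi_{\text{marg}}(y)=\int_\Theta\pi_{\text{obs}}(y\mid\theta)\pi_{\text{prior}}(\theta)\,\mathrm{d}\theta$, $\pi_{\text{post}}(\theta\mid y)=\pi_{\text{obs}}(y\mid\theta)\pi_{\text{prior}}(\theta)/\pi_{\text{marg}}(y)$. A posterior family is $\phi:\Theta\times Y\to\mathbb{R}^+$ with $\int_\Theta\phi(\theta\mid y)\,\mathrm{d}\theta=1$ for all $y$; a test quantity is a measurable $f:\Theta\times Y\to\mathbb{R}$. Fitted CDF $C_{\phi,f}(s\mid y)=\int_\Theta\mathbb{I}[f(\theta,y)\le s]\phi(\theta\mid y)\,\mathrm{d}\theta$; true CDF $C_f(s\mid y)=\int_\Theta\mathbb{I}[f(\theta,y)\le s]\pi_{\text{post}}(\theta\mid y)\,\mathrm{d}\theta$; fitted tie probability $D_{\phi,f}(s\mid y)=\int_\Theta\mathbb{I}[f(\theta,y)=s]\phi(\theta\mid y)\,\mathrm{d}\theta$. With $U\sim\mathrm{uniform}[0,1]$, $r_{\phi,f}(x\mid\tilde\theta,y)=\Pr\big(C_{\phi,f}(f(\tilde\theta,y)\mid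 y)-U\,D_{\phi,f}(f(\tilde\theta,y)\mid y)\le x\big)$ and $q_{\phi,f}(x\mid y)=\int_\Theta\pi_{\text{post}}(\tilde\theta\mid y)r_{\phi,f}(x\mid\tilde\theta,y)\,\mathrm{d}\tilde\theta$. *)

(* Defs.v *)
From HB Require Import structures.
From mathcomp Require Import all_boot all_order all_algebra.
From mathcomp Require Import all_classical all_reals all_analysis.
Set Implicit Arguments. Unset Strict Implicit. Unset Printing Implicit Defensive.
Import Order.TTheory GRing.Theory Num.Theory.
Local Open Scope classical_set_scope.
Local Open Scope ring_scope.

Section Defs.
Context {R : realType} {d1 d2 : measure_display}
  {Th : measurableType d1} {Y : measurableType d2}.
Variable mu : {measure set Th -> \bar R}.

Definition is_model (nu : {measure set Y -> \bar R})
  (prior : Th -> R) (obs : Y -> Th -> R) : Prop :=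
  [/\ (forall th, 0 <= prior th), measurable_fun setT prior
    & (\int[mu]_th (prior th)%:E = 1)%E] /\
  [/\ (forall y th, 0 <= obs y th),
      measurable_fun setT (fun z : Y * Th => obs z.1 z.2)
    & forall th, (\int[nu]_y (obs y th)%:E = 1)%E].

Definition marg (prior : Th -> R) (obs : Y -> Th -> R) (y : Y) : \bar R :=
  \int[mu]_th (obs y th * prior th)%:E.

Definition post (prior : Th -> R) (obs : Y -> Th -> R) (th : Th) (y : Y) : R :=
  obs y th * prior th / fine (marg prior obs y).

Definition posterior_family (phi : Th -> Y -> R) : Prop :=
  [/\ (forall th y, 0 <= phi th y),
      measurable_fun setT (fun z : Th * Y => phi z.1 z.2)
    & forall y, (\int[mu]_th (phi th y)%:E = 1)%E].

Definition test_quantity (f : Th -> Y -> R) : Prop :=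
  measurable_fun setT (fun z : Th * Y => f z.1 z.2).

Definition fitted_cdf (phi f : Th -> Y -> R) (s : R) (y : Y) : \bar R :=
  \int[mu]_th (((f th y <= s)%R : bool)%:R * phi th y)%:E.

Definition true_cdf (prior : Th -> R) (obs : Y -> Th -> R) (f : Th -> Y -> R)
  (s : R) (y : Y) : \bar R :=
  \int[mu]_th (((f th y <= s)%R : bool)%:R * post prior obs th y)%:E.

Definition tie_prob (phi f : Th -> Y -> R) (s : R) (y : Y) : \bar R :=
  \int[mu]_th (((f th y == s) : bool)%:R * phi th y)%:E.

Definition rank_cdf (phi f : Th -> Y -> R) (x : R) (th' : Th) (y : Y) : \bar R :=
  (@lebesgue_measure R)
    [set u : R | (0 <= u <= 1) /\
       fine (fitted_cdf phi f (f th' y) y) - u * fine (tie_prob phi f (f th' y) y) <= x].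

Definition qfun (phi : Th -> Y -> R) (prior : Th -> R) (obs : Y -> Th -> R)
  (f : Th -> Y -> R) (x : R) (y : Y) : \bar R :=
  (\int[mu]_t ((post prior obs t y)%:E * rank_cdf phi f x t y))%E.

End Defs.

(* Main.v *)
Require Import Defs.
From HB Require Import structures.
From mathcomp Require Import all_boot all_order all_algebra.
From mathcomp Require Import all_classical all_reals all_analysis.
From mathcomp Require Import measurable_realfun.
From mathcomp Require Import ring lra.
Import Order.TTheory GRing.Theory Num.Theory.
Local Open Scope classical_set_scope.
Local Open Scope ring_scope.

Section dens.
Context {R : realType} {d : measure_display} {T : measurableType d}.
Variable mu : {measure set T -> \bar R}.
Variable w : T -> R.

Definition dens (w0 : forall t, 0 <= w t) (mw : measurable_fun setT w)
  (A : set T) : \bar R := (\int[mu]_(t in A) (w t)%:E)%E.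

Hypothesis w0 : forall t, 0 <= w t.
Hypothesis mw : measurable_fun setT w.

Let dens0 : dens w0 mw set0 = 0%E. Proof. by rewrite /dens integral_set0. Qed.
Let dens_ge0 A : (0 <= dens w0 mw A)%E.
Proof. by apply: integral_ge0 => t _; rewrite lee_fin. Qed.
Let dens_sigma : semi_sigma_additive (dens w0 mw).
Proof.
apply: semi_sigma_additive_nng_induced => //; first exact/measurable_EFinP.

Qed.
HB.instance Definition _ := isMeasure.Build _ T R (dens w0 mw) dens0 dens_ge0 dens_sigma.

Lemma IndE (g : T -> R) (P : R -> bool) :
  (\int[mu]_t ((P (g t))%:R * w t)%:E = dens w0 mw [set t | P (g t)])%E.
Proof.
rewrite /dens [RHS]integral_mkcond; apply: eq_integral => t _ /=.
rewrite /patch; case: ifPn => [/set_mem/= ->|]; first by rewrite mul1r.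
by rewrite notin_setE /= => /negP/negbTE ->; rewrite mul0r.
Qed.

End dens.

Definition densM {R : realType} {d : measure_display} {T : measurableType d}
  (mu : {measure set T -> \bar R}) {w : T -> R} (w0 : forall t, 0 <= w t)
  (mw : measurable_fun setT w) : {measure set T -> \bar R} := dens mu w w0 mw.

Lemma IndME {R : realType} {d : measure_display} {T : measurableType d}
  (mu : {measure set T -> \bar R}) (w : T -> R) (w0 : forall t, 0 <= w t)
  (mw : measurable_fun setT w) (g : T -> R) (P : R -> bool) :
  (\int[mu]_t ((P (g t))%:R * w t)%:E = densM mu w0 mw [set t | P (g t)])%E.
Proof. exact: IndE. Qed.

Section cont.
Context {R : realType} {d : measure_display} {T : measurableType d}.
Variable g : T -> R.
Hypothesis mg : measurable_fun setT g.

Lemma mpre (P : set R) : measurable P -> measurable (g @^-1` P).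
Proof. by move=> mP; rewrite -[X in measurable X]setTI; exact: mg. Qed.

Lemma mLe s : measurable [set t | g t <= s].
Proof.
have -> : [set t | g t <= s] = g @^-1` `]-oo, s] by apply/seteqP; split => t /=; rewrite in_itv.
exact: mpre.
Qed.

Lemma mLt s : measurable [set t | g t < s].
Proof.
have -> : [set t | g t < s] = g @^-1` `]-oo, s[ by apply/seteqP; split => t /=; rewrite in_itv.
exact: mpre.
Qed.

Lemma mEq s : measurable [set t | g t == s].
Proof.
have -> : [set t | g t == s] = g @^-1` [set s].
  by apply/seteqP; split => t /=; [move/eqP|move=> ->].
exact: mpre.
Qed.

Variable W : {measure set T -> \bar R}.

Lemma cvg_left s :
  (fun n => W [set t | g t <= s - n.+1%:R^-1]) @ \oo --> W [set t | g t < s].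
Proof.
have -> : [set t | g t < s] = \bigcup_n [set t | g t <= s - n.+1%:R^-1].
  apply/seteqP; split => t /=.
    move=> gs; have [k hk] := ltr_add_invr gs.
    by exists k => //=; rewrite lerBrDr ltW.
  case=> n _ /= h; apply: (le_lt_trans h); rewrite ltrBlDr ltrDl invr_gt0.
  by rewrite ltr0n.
apply: nondecreasing_cvg_mu.
- by move=> n; exact: mLe.
- by apply: bigcup_measurable => n _; exact: mLe.
- move=> m n mn; apply/subsetPset => t /= h; apply: (le_trans h); rewrite lerD2l lerN2.
  by rewrite lef_pV2 ?posrE ?ltr0n // ler_nat.
Qed.

Lemma cvg_right s : (W setT < +oo)%E ->
  (fun n => W [set t | g t <= s + n.+1%:R^-1]) @ \oo --> W [set t | g t <= s].
Proof.
move=> Wfin.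
have -> : [set t | g t <= s] = \bigcap_n [set t | g t <= s + n.+1%:R^-1].
  apply/seteqP; split => t /=.
    move=> h n _ /=; apply: (le_trans h); rewrite lerDl invr_ge0 ler0n //.
  move=> h; rewrite leNgt; apply/negP => sg.
  have [k hk] := ltr_add_invr sg.
  by have := h k Logic.I; rewrite /= leNgt hk.
apply: nonincreasing_cvg_mu.
- by apply: (le_lt_trans _ Wfin); apply: le_measure; rewrite ?inE //; exact: mLe.
- by move=> n; exact: mLe.
- by apply: bigcap_measurableType => n _; exact: mLe.
- move=> m n mn; apply/subsetPset => t /= h; apply: (le_trans h); rewrite lerD2l.
  by rewrite lef_pV2 ?posrE ?ltr0n // ler_nat.
Qed.

Lemma cvg_top :
  (fun n => W [set t | g t <= n%:R]) @ \oo --> W setT.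
Proof.
have -> : setT = \bigcup_n [set t | g t <= n%:R].
  apply/seteqP; split => t //= _.
  exists (Num.Def.trunc `|g t|).+1 => //=.
  exact: (le_trans (ler_norm _) (ltW (truncnS_gt _))).
apply: nondecreasing_cvg_mu.
- by move=> n; exact: mLe.
- by apply: bigcup_measurable => n _; exact: mLe.
- by move=> m n mn; apply/subsetPset => t /= h; apply: (le_trans h); rewrite ler_nat.
Qed.

Lemma cvg_bot : (W setT < +oo)%E ->
  (fun n => W [set t | g t <= - n%:R]) @ \oo --> 0%E.
Proof.
move=> Wfin.
rewrite -(measure0 W).
have -> : set0 = \bigcap_n [set t | g t <= - n%:R].
  apply/seteqP; split => t //= h.
  have := h (Num.Def.trunc `|g t|).+1 Logic.I => /=.
  rewrite lerNr => h2.
  have := lt_le_trans (truncnS_gt `|g t|) h2.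
  by rewrite ltNge (le_trans (_ : - g t <= `|g t|)) // -normrN ler_norm.
apply: nonincreasing_cvg_mu.
- by apply: (le_lt_trans _ Wfin); apply: le_measure; rewrite ?inE //; exact: mLe.
- by move=> n; exact: mLe.
- by apply: bigcap_measurableType => n _; exact: mLe.
- move=> m n mn; apply/subsetPset => t /= h; apply: (le_trans h).
  by rewrite lerN2 ler_nat.
Qed.

End cont.

Lemma leb_cc (R : realType) (c e : R) :
  lebesgue_measure [set u : R | c <= u <= e] = if c < e then (e - c)%:E else 0%E.
Proof.
have -> : [set u : R | c <= u <= e] = [set` `[c, e]] by apply/seteqP; split => u /=; rewrite in_itv.
rewrite lebesgue_measure_itv /= lte_fin.
case: ifP => //.
Qed.

Definition hval {R : realType} (x a l : R) : R :=
  if a <= x then 1 else if l < x then (x - l) / (a - l) else 0.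

Lemma HV (R : realType) (x a l : R) : l <= a ->
  lebesgue_measure [set u : R | (0 <= u <= 1) /\ a - u * (a - l) <= x] = (hval x a l)%:E.
Proof.
move=> la; rewrite /hval; case: ifPn => ax.
  have -> : [set u : R | (0 <= u <= 1) /\ a - u * (a - l) <= x] = [set u | 0 <= u <= 1].
    apply/seteqP; split => u /=; first by case.
    move=> /andP[u0 u1]; split; first by rewrite u0 u1.
    by rewrite (le_trans _ ax) // lerBlDr lerDl mulr_ge0 // subr_ge0.
  by rewrite leb_cc ltr01 subr0.
rewrite -ltNge in ax.
have [al|al] := eqVneq a l.
  subst l; rewrite ltNge (ltW ax) /=.
  have -> : [set u : R | (0 <= u <= 1) /\ a - u * (a - a) <= x] = set0.
    apply/seteqP; split => u //= [_]; rewrite subrr mulr0 subr0 => h.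
    by move: (lt_le_trans ax h); rewrite ltxx.
  exact: measure0.
have b0 : 0 < a - l by rewrite subr_gt0 lt_neqAle eq_sym al la.
have -> : [set u : R | (0 <= u <= 1) /\ a - u * (a - l) <= x] =
          [set u | (a - x) / (a - l) <= u <= 1].
  apply/seteqP; split => u /=.
    case=> /andP[u0 u1] h; rewrite u1 andbT ler_pdivrMr //.
    by rewrite lerBlDr addrC -lerBlDr.
  move=> /andP[h0 u1]; split.
    rewrite u1 andbT; apply: le_trans h0; apply: divr_ge0; last exact: ltW.
    by rewrite subr_ge0 ltW.
  by move: h0; rewrite ler_pdivrMr // lerBlDr addrC -lerBlDr.
rewrite leb_cc ltr_pdivrMr // mul1r ltrBlDr addrC -ltrBlDr opprB addrCA subrr addr0.
case: ifPn => // lx; congr (_%:E).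
by field; rewrite subr_eq0 al.
Qed.

Section main.
Context {R : realType} {d : measure_display} {T : measurableType d}.
Variable mu : {measure set T -> \bar R}.
Variable g : T -> R.
Hypothesis mg : measurable_fun setT g.
Variable w : T -> R.
Hypothesis w0 : forall t, 0 <= w t.
Hypothesis mw : measurable_fun setT w.
Hypothesis wT : (\int[mu]_t (w t)%:E = 1)%E.

Local Notation W := (dens mu w w0 mw).

Lemma WT : W setT = 1%E. Proof. exact: wT. Qed.

Lemma WTfin : (W setT < +oo)%E. Proof. by rewrite WT ltey. Qed.

Lemma Wfin A : measurable A -> W A = (fine (W A))%:E /\ 0 <= fine (W A) <= 1.
Proof.
move=> mA; have h0 : (0 <= W A)%E := measure_ge0 _ _.
have h1 : (W A <= 1)%E by rewrite -WT; apply: le_measure; rewrite ?inE.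
have fA : W A \is a fin_num by rewrite ge0_fin_numE // (le_lt_trans h1) // ltey.
split; first by rewrite fineK.
by rewrite fine_ge0 //= -lee_fin fineK.
Qed.

Definition F s := fine (W [set t | g t <= s]).
Definition L s := fine (W [set t | g t < s]).

Lemma FE s : W [set t | g t <= s] = (F s)%:E.
Proof. rewrite /F /L; exact: (Wfin _ (mLe g mg s)).1. Qed.
Lemma LE s : W [set t | g t < s] = (L s)%:E.
Proof. rewrite /F /L; exact: (Wfin _ (mLt g mg s)).1. Qed.
Lemma F01 s : 0 <= F s <= 1.
Proof. rewrite /F /L; exact: (Wfin _ (mLe g mg s)).2. Qed.
Lemma L01 s : 0 <= L s <= 1.
Proof. rewrite /F /L; exact: (Wfin _ (mLt g mg s)).2. Qed.

Lemma LeU s : [set t | g t <= s] = [set t | g t < s] `|` [set t | g t == s].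
Proof.
apply/seteqP; split => t /=.
  by rewrite le_eqVlt => /orP[->|->]; [right|left].
by case=> [/ltW|/eqP->].
Qed.

Lemma LtEq0 s : [set t | g t < s] `&` [set t | g t == s] = set0.
Proof.
by apply/seteqP; split => t //= [h /eqP e]; move: h; rewrite e ltxx.
Qed.

Lemma EqE s : W [set t | g t == s] = (F s - L s)%:E.
Proof.
have hU : W [set t | g t <= s] = (W [set t | (g t < s)%R] + W [set t | g t == s])%E.
  by rewrite LeU; apply: measureU; [exact: mLt|exact: mEq|exact: LtEq0].
move: hU; rewrite FE LE (Wfin _ (mEq g mg s)).1 -EFinD => -[->].
by rewrite addrC addKr.
Qed.

Lemma Fle s s' : s <= s' -> F s <= F s'.
Proof.
move=> ss; rewrite -lee_fin -!FE; apply: le_measure; rewrite ?inE; try exact: mLe.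
by move=> t /= h; exact: le_trans h ss.
Qed.

Lemma FleL s s' : s < s' -> F s <= L s'.
Proof.
move=> ss; rewrite -lee_fin -FE -LE; apply: le_measure; rewrite ?inE; try exact: mLe; try exact: mLt.
by move=> t /= h; exact: le_lt_trans h ss.
Qed.

Lemma LleF s : L s <= F s.
Proof.
rewrite -lee_fin -FE -LE; apply: le_measure; rewrite ?inE; try exact: mLe; try exact: mLt.
by move=> t /= /ltW.
Qed.

Lemma Ltop x : x < 1 -> exists s, x < F s.
Proof.
move=> x1; case: (pselect (exists s, x < F s)) => // /forallNP h.
have hc : (fun n => W [set t | g t <= n%:R]) @ \oo --> W setT := cvg_top g mg W.
have : (W setT <= x%:E)%E.
  rewrite -(cvg_lim _ hc) //; apply: lime_le; first by apply/cvg_ex; eexists; exact: hc.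
  by apply: nearW => n; rewrite FE lee_fin leNgt; apply/negP; exact: h.
by rewrite WT lee_fin leNgt x1.
Qed.

Lemma Lbot x : 0 < x -> exists s, F s < x.
Proof.
move=> x0; case: (pselect (exists s, F s < x)) => // /forallNP h.
have hc : (fun n => W [set t | g t <= - n%:R]) @ \oo --> 0%E := cvg_bot g mg W WTfin.
have : (x%:E <= 0)%E.
  rewrite -(cvg_lim _ hc) //; apply: lime_ge; first by apply/cvg_ex; eexists; exact: hc.
  by apply: nearW => n; rewrite FE lee_fin leNgt; apply/negP; exact: h.
by rewrite lee_fin leNgt x0.
Qed.

Lemma Lleft s0 x : (forall s, s < s0 -> F s <= x) -> L s0 <= x.
Proof.
move=> h; have hc : (fun n => W [set t | g t <= s0 - n.+1%:R^-1]) @ \oo --> W [set t | g t < s0] := cvg_left g mg W s0.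
rewrite -lee_fin -LE -(cvg_lim _ hc) //; apply: lime_le; first by apply/cvg_ex; eexists; exact: hc.
apply: nearW => n; rewrite FE lee_fin; apply: h.
by rewrite ltrBlDr ltrDl invr_gt0 ltr0n.
Qed.

Lemma Rright s0 x : (forall s, s0 < s -> x <= F s) -> x <= F s0.
Proof.
move=> h; have hc : (fun n => W [set t | g t <= s0 + n.+1%:R^-1]) @ \oo --> W [set t | g t <= s0] := cvg_right g mg W s0 WTfin.
rewrite -lee_fin -FE -(cvg_lim _ hc) //; apply: lime_ge; first by apply/cvg_ex; eexists; exact: hc.
apply: nearW => n; rewrite FE lee_fin; apply: h.
by rewrite ltrDl invr_gt0 ltr0n.
Qed.

Lemma struct x : 0 <= x <= 1 ->
  x = 1 \/ (x = 0 /\ forall s, hval x (F s) (L s) = 0) \/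
  exists s0 c : R, [/\ 0 <= c <= 1,
    forall s, hval x (F s) (L s) = ((s < s0)%R : bool)%:R + c * ((s == s0) : bool)%:R
    & L s0 + c * (F s0 - L s0) = x].
Proof.
move=> /andP[x0 x1].
have [->|xne1] := eqVneq x 1; first by left.
have xlt1 : x < 1 by rewrite lt_neqAle xne1 x1.
right.
case: (pselect (exists s, F s <= x)) => [[s1 hs1]|hS]; last first.
  left.
  have Fgt s : x < F s by rewrite ltNge; apply/negP => h; apply: hS; exists s.
  have x00 : x = 0.
    apply/eqP; rewrite eq_le x0 andbT leNgt; apply/negP => xp.
    have [s hs] := Lbot _ xp.
    by move: (Fgt s); rewrite ltNge (ltW hs).
  split => // s; rewrite /hval; have := Fgt s; rewrite ltNge => /negbTE ->.
  by rewrite x00 ltNge (andP (L01 s)).1.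
right.
have [n hn] := Ltop _ xlt1.
pose S := [set s | F s <= x].
have ubS : ubound S n.
  move=> s /= hs; rewrite leNgt; apply/negP => ns.
  by have := Fle _ _ (ltW ns); rewrite leNgt (le_lt_trans hs hn).
have hsup : has_sup S by split; [exists s1 | exists n].
set s0 := sup S.
have below s : s < s0 -> F s <= x.
  move=> ss0; have e0 : 0 < s0 - s by rewrite subr_gt0.
  have [e Se he] := sup_adherent e0 hsup.
  move: he; rewrite opprB addrCA subrr addr0 => he.
  exact: le_trans (Fle _ _ (ltW he)) Se.
have above s : s0 < s -> x < F s.
  move=> s0s; rewrite ltNge; apply/negP => hs.
  by have := sup_upper_bound hsup hs; rewrite leNgt s0s.
have Lx : L s0 <= x := Lleft _ _ below.
have Fx : x <= F s0 := Rright _ _ (fun s h => ltW (above s h)).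
have LF := LleF s0.
exists s0, (hval x (F s0) (L s0)); split.
- rewrite /hval; case: ifPn => [_|Fx']; first by rewrite ler01 lexx.
  case: ifPn => [lx|_]; last by rewrite lexx ler01.
  rewrite -ltNge in Fx'.
  have d0 : 0 < F s0 - L s0 by rewrite subr_gt0 (lt_trans lx Fx').
  rewrite divr_ge0 ?subr_ge0 ?(ltW lx) ?(ltW d0) //=.
  by rewrite ler_pdivrMr // mul1r lerD2r ltW.
- move=> s; case: (ltgtP s s0) => [ss0|s0s|->].
  + by rewrite /hval below // mulr0 addr0.
  + rewrite mulr0 addr0 /hval.
    have [h1 h2] := midf_lt s0s.
    have := above _ s0s; rewrite ltNge => /negbTE ->.
    have := lt_le_trans (above _ h1) (FleL _ _ h2).
    by move=> xL; rewrite ltNge (ltW xL).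
  + by rewrite mulr1 add0r.
- rewrite /hval; case: ifPn => [Fle'|].
    by rewrite mul1r addrC subrK; apply/eqP; rewrite eq_le Fle' Fx.
  rewrite -ltNge => Fx'; case: ifPn => [lx|].
    by field; rewrite subr_eq0; apply/eqP => e; move: lx; rewrite -e ltNge (ltW Fx').
  by rewrite -leNgt => xL; rewrite mul0r addr0; apply/eqP; rewrite eq_le Lx xL.

Qed.

End main.

Section intg.
Context {R : realType} {d : measure_display} {T : measurableType d}.
Variable mu : {measure set T -> \bar R}.
Variable g : T -> R.
Hypothesis mg : measurable_fun setT g.
Variable p : T -> R.
Hypothesis p0 : forall t, 0 <= p t.
Hypothesis mp : measurable_fun setT p.

Lemma mind (P : R -> bool) : measurable [set t | P (g t)] ->
  measurable_fun setT (fun t => ((P (g t))%:R : R)).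
Proof.
move=> mA.
have -> : (fun t => ((P (g t))%:R : R)) = \1_[set t | P (g t)].
  apply/funext => t; rewrite /indic.
  by case: (boolP (P (g t))) => h; [rewrite mem_set | rewrite memNset //= ; apply/negP].
exact: measurable_indic.
Qed.

Lemma mstep s0 c : measurable_fun setT
  (fun t => (((g t < s0)%R : bool)%:R + c * ((g t == s0) : bool)%:R : R)).
Proof.
apply: measurable_funD; first exact: (mind (fun r => r < s0) (mLt g mg s0)).
apply: measurable_funM; first exact: measurable_cst.
exact: (mind (fun r => r == s0) (mEq g mg s0)).
Qed.

Lemma INT s0 c : 0 <= c ->
  (\int[mu]_t ((p t)%:E * ((((g t < s0)%R : bool)%:R + c * ((g t == s0) : bool)%:R)%:E))
  = densM mu p0 mp [set t | (g t < s0)%R] + c%:E * densM mu p0 mp [set t | g t == s0])%E.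
Proof.
move=> c0.
rewrite (eq_integral (fun t => ((((g t < s0)%R : bool)%:R * p t)%:E +
   c%:E * (((g t == s0) : bool)%:R * p t)%:E)%E)); last first.
  by move=> t _; rewrite -EFinM -EFinM -EFinD; congr (_%:E); ring.
have m1 : measurable_fun setT (fun t => ((((g t < s0)%R : bool)%:R * p t)%:E)).
  apply/measurable_EFinP; apply: measurable_funM => //.
  exact: (mind (fun r => r < s0) (mLt g mg s0)).
have m2 : measurable_fun setT (fun t => ((((g t == s0)) : bool)%:R * p t)%:E).
  apply/measurable_EFinP; apply: measurable_funM => //.
  exact: (mind (fun r => r == s0) (mEq g mg s0)).
rewrite ge0_integralD //; last 3 first.
- by move=> t _; rewrite lee_fin mulr_ge0.
- by move=> t _; rewrite mule_ge0 // lee_fin mulr_ge0.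
- exact: measurable_funeM.
rewrite ge0_integralZl_EFin //; last by move=> t _; rewrite lee_fin mulr_ge0.
by rewrite (IndME mu p p0 mp g (fun r => r < s0)) (IndME mu p p0 mp g (fun r => r == s0)).
Qed.

End intg.

Lemma hval_01 {R : realType} (x a l : R) : l <= a -> 0 <= hval x a l <= 1.
Proof.
move=> la; rewrite /hval; case: ifPn => [_|ax]; first by rewrite ler01 lexx.
case: ifPn => [lx|_]; last by rewrite lexx ler01.
rewrite -ltNge in ax.
have d0 : 0 < a - l by rewrite subr_gt0 (lt_trans lx ax).
rewrite divr_ge0 ?subr_ge0 ?(ltW lx) ?(ltW d0) //=.
by rewrite ler_pdivrMr // mul1r lerD2r ltW.
Qed.

Theorem theorem5 (R : realType) (d1 d2 : measure_display)
  (Th : measurableType d1) (Y : measurableType d2)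
  (mu : {sigma_finite_measure set Th -> \bar R})
  (nu : {measure set Y -> \bar R})
  (prior : Th -> R) (obs : Y -> Th -> R) (phi : Th -> Y -> R) (f : Th -> Y -> R) :
  is_model mu nu prior obs ->
  posterior_family mu phi ->
  test_quantity f ->
  forall y : Y,
    (forall s : R, fitted_cdf mu phi f s y = true_cdf mu prior obs f s y) <->
    (forall x : R, 0 <= x <= 1 -> qfun mu phi prior obs f x y = x%:E).
Proof.
move=> [[prior0 mprior _] [obs0 mobs _]] [phi0 mphi phi1] mf y.
pose g := fun t => f t y.
have mg : measurable_fun setT g := measurable_fun_pair1 (f := fun z : Th * Y => f z.1 z.2) y mf.
pose w := fun t => phi t y.
have w0 : forall t, 0 <= w t by move=> t; exact: phi0.
have mw : measurable_fun setT w := measurable_fun_pair1 (f := fun z : Th * Y => phi z.1 z.2) y mphi.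
have wT : (\int[mu]_t (w t)%:E = 1)%E := phi1 y.
pose p := fun t => post mu prior obs t y.
have p0 : forall t, 0 <= p t.
  move=> t; rewrite /p /post; apply: divr_ge0; first exact: mulr_ge0.
  by apply: fine_ge0; apply: integral_ge0 => th _; rewrite lee_fin mulr_ge0.
have mp : measurable_fun setT p.
  rewrite /p /post; apply: measurable_funM; last exact: measurable_cst.
  apply: measurable_funM => //.
  exact: (measurable_fun_pair2 (f := fun z : Y * Th => obs z.1 z.2) y mobs).
have fitE s : fitted_cdf mu phi f s y = densM mu w0 mw [set t | g t <= s] :=
  IndME mu w w0 mw g (fun r => r <= s).
have truE s : true_cdf mu prior obs f s y = densM mu p0 mp [set t | g t <= s] :=
  IndME mu p p0 mp g (fun r => r <= s).
have tieE s : tie_prob mu phi f s y = densM mu w0 mw [set t | g t == s] :=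
  IndME mu w w0 mw g (fun r => r == s).
have EqE' s : densM mu w0 mw [set t | g t == s] =
    (F mu g w w0 mw s - L mu g w w0 mw s)%:E := EqE mu g mg w w0 mw wT s.
have rankE x t : rank_cdf mu phi f x t y =
    (hval x (F mu g w w0 mw (g t)) (L mu g w w0 mw (g t)))%:E.
  rewrite /rank_cdf fitE tieE EqE' /=.
  exact: HV (LleF mu g mg w w0 mw wT _).
have qE x : qfun mu phi prior obs f x y =
    (\int[mu]_t ((p t)%:E * (hval x (F mu g w w0 mw (g t)) (L mu g w w0 mw (g t)))%:E))%E.
  by rewrite /qfun; apply: eq_integral => t _; rewrite rankE.
pose F' := F mu g w w0 mw; pose L' := L mu g w w0 mw.
have FE' s : densM mu w0 mw [set t | g t <= s] = (F' s)%:E := FE mu g mg w w0 mw wT s.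
have LE' s : densM mu w0 mw [set t | g t < s] = (L' s)%:E := LE mu g mg w w0 mw wT s.
have mh x : 0 <= x <= 1 -> measurable_fun setT (fun t => hval x (F' (g t)) (L' (g t))).
  move=> x01; case: (struct mu g mg w w0 mw wT x x01) => [x1|[[x0' h0]|[s0 [c [c01 hs hx]]]]].
  - rewrite x1; have -> : (fun t => hval 1 (F' (g t)) (L' (g t))) = cst 1.
      by apply/funext => t; rewrite /hval (andP (F01 mu g mg w w0 mw wT _)).2.
    exact: measurable_cst.
  - have -> : (fun t => hval x (F' (g t)) (L' (g t))) = cst 0.
      by apply/funext => t; rewrite h0.
    exact: measurable_cst.
  - have -> : (fun t => hval x (F' (g t)) (L' (g t))) =
      (fun t => (((g t < s0)%R : bool)%:R + c * ((g t == s0) : bool)%:R : R)).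
      by apply/funext => t; rewrite hs.
    exact: mstep.
have mhE x : 0 <= x <= 1 -> measurable_fun setT
    (fun t => ((p t)%:E * (hval x (F' (g t)) (L' (g t)))%:E)%E).
  move=> x01; have -> : (fun t => ((p t)%:E * (hval x (F' (g t)) (L' (g t)))%:E)%E) =
    (fun t => (p t * hval x (F' (g t)) (L' (g t)))%:E) by apply/funext => t.
  by apply/measurable_EFinP; apply: measurable_funM => //; exact: mh.
split.
- move=> cdf x x01.
  have eqLe s : densM mu p0 mp [set t | g t <= s] = densM mu w0 mw [set t | g t <= s].
    by rewrite -fitE -truE cdf.
  have eqLt s : densM mu p0 mp [set t | g t < s] = densM mu w0 mw [set t | g t < s].
    have h1 : (fun n => densM mu p0 mp [set t | g t <= s - n.+1%:R^-1]) @ \oo -->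
      densM mu p0 mp [set t | g t < s] := cvg_left g mg _ s.
    have h2 : (fun n => densM mu w0 mw [set t | g t <= s - n.+1%:R^-1]) @ \oo -->
      densM mu w0 mw [set t | g t < s] := cvg_left g mg _ s.
    rewrite -(cvg_lim _ h1) // -(cvg_lim _ h2) //.
    by under eq_fun do rewrite eqLe.
  have eqEq s : densM mu p0 mp [set t | g t == s] = densM mu w0 mw [set t | g t == s].
    have hp : densM mu p0 mp [set t | g t <= s] =
        (densM mu p0 mp [set t | (g t < s)%R] + densM mu p0 mp [set t | g t == s])%E.
      by rewrite LeU; apply: measureU; [exact: mLt|exact: mEq|exact: LtEq0].
    have hw : densM mu w0 mw [set t | g t <= s] =
        (densM mu w0 mw [set t | (g t < s)%R] + densM mu w0 mw [set t | g t == s])%E.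
      by rewrite LeU; apply: measureU; [exact: mLt|exact: mEq|exact: LtEq0].
    move: hp; rewrite eqLe eqLt hw LE' => /(congr1 (fun z => (z - (L' s)%:E)%E)).
    by rewrite !(addeC ((L' s)%:E)) !addeK.
  have pT : densM mu p0 mp setT = 1%E.
    have h1 : (fun n => densM mu p0 mp [set t | g t <= n%:R]) @ \oo -->
      densM mu p0 mp setT := cvg_top g mg _.
    have h2 : (fun n => densM mu w0 mw [set t | g t <= n%:R]) @ \oo -->
      densM mu w0 mw setT := cvg_top g mg _.
    rewrite -(cvg_lim _ h1) // -wT -[X in _ = X]/(densM mu w0 mw setT) -(cvg_lim _ h2) //.
    by under eq_fun do rewrite eqLe.
  rewrite qE.
  case: (struct mu g mg w w0 mw wT x x01) => [x1|[[x0' h0]|[s0 [c [c01 hs hx]]]]].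
  + rewrite x1; under eq_integral do rewrite /hval (andP (F01 mu g mg w w0 mw wT _)).2 mule1.
    exact: pT.
  + under eq_integral do rewrite h0 mule0.
    by rewrite integral0 x0'.
  + under eq_integral do rewrite hs.
    rewrite (INT mu g mg); last by case/andP: c01.
    by rewrite eqLt eqEq LE' EqE' -EFinM -EFinD hx.
- move=> hq s; rewrite fitE truE FE'.
  have a01 := F01 mu g mg w w0 mw wT s.
  have mI : measurable_fun setT (fun t => ((((g t <= s)%R : bool)%:R * p t)%:E)).
    apply/measurable_EFinP; apply: measurable_funM => //.
    exact: (mind g (fun r => r <= s) (mLe g mg s)).
  have hv01 x t := hval_01 x _ _ (LleF mu g mg w w0 mw wT (g t)).
  have up : (densM mu p0 mp [set t | (g t <= s)%R] <= (F' s)%:E)%E.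
    rewrite -(hq _ a01) qE -(IndME mu p p0 mp g (fun r => r <= s)).
    apply: ge0_le_integral => //.
    - by move=> t _; rewrite lee_fin mulr_ge0.
    - exact: mhE.
    - move=> t _; rewrite lee_fin; case: (boolP (g t <= s)) => h.
        by rewrite mul1r /hval (Fle mu g mg w w0 mw wT _ _ h) mulr1.
      by rewrite mul0r mulr_ge0 // (andP (hv01 _ t)).1.
  have low x : 0 <= x < F' s -> (x%:E <= densM mu p0 mp [set t | (g t <= s)%R])%E.
    move=> /andP[x0 xa].
    have x01 : 0 <= x <= 1 by rewrite x0 (le_trans (ltW xa)) // (andP a01).2.
    rewrite -(hq x x01) qE -(IndME mu p p0 mp g (fun r => r <= s)).
    apply: ge0_le_integral => //.
    - by move=> t _; rewrite lee_fin mulr_ge0 // (andP (hv01 _ t)).1.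
    - exact: mhE.
    - move=> t _; rewrite lee_fin; case: (boolP (g t <= s)) => h.
        by rewrite mul1r ler_piMr // (andP (hv01 _ t)).2.
      rewrite -ltNge in h; rewrite mul0r /hval.
      have := lt_le_trans xa (Fle mu g mg w w0 mw wT _ _ (ltW h)).
      rewrite ltNge => /negbTE ->.
      have := lt_le_trans xa (FleL mu g mg w w0 mw wT _ _ h).
      by move=> /lt_gtF ->; rewrite mulr0.
  set v := densM mu p0 mp [set t | g t <= s] in up low *.
  have v0 : (0 <= v)%E := measure_ge0 _ _.
  have fv : v \is a fin_num by rewrite ge0_fin_numE // (le_lt_trans up) // ltey.
  apply/eqP; rewrite eq_le up andbT -(fineK fv) lee_fin leNgt; apply/negP => va.
  have fv0 : 0 <= fine v := fine_ge0 v0.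
  have [h1 h2] := midf_lt va.
  have := low ((fine v + F' s) / 2); rewrite (le_trans fv0 (ltW h1)) h2 => /(_ isT).
  by rewrite -(fineK fv) lee_fin leNgt h1.
Qed.
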